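(* Let $\Gamma$ be a metrized graph with $v \geq 4$ vertices. Then $$(v-4)\,Kf(\Gamma)=\sum_{e_i \in E(\Gamma)} \frac{R_i}{L_i+R_i}\, Kf(\overline{\Gamma}_i) - v\cdot y(\Gamma).$$
   Context: A metrized graph $\Gamma$ is a finite connected graph (multiple edges and self-loops allowed) each of whose edges is identified with a closed segment of positive length. Its vertex set $V(\Gamma)$ is a finite nonempty set of points containing every point whose valence (number of directions emanating from it) is not $2$; $v=\#V(\Gamma)$; $E(\Gamma)$ is the set of edges (closed segments between vertices), and $L_i$ is the length of the edge $e_i$. $r(x,y)$ is the effective resistance on $\Gamma$ (each edge a resistor with resistance equal to its length), and $r_\beta$ is the resistance function on a metrized graph $\beta$. For an edge $e_i$ with end points $p_i,q_i$, $\Gamma-e_i$ is the graph with the interior of $e_i$ deleted. If $\Gamma-e_i$ is connected, $R_i$ is the effective resistance between $p_i$ and $q_i$ in $\Gamma-e_i$, and for a point $p$, $R_{a_i,p}=\hat j_{p_i}(p,q_i)$ and $R_{b_i,p}=\hat j_{q_i}(p,p_i)$, where $\hat j_z(x,y)$ is the voltage function of $\Gamma-e_i$ (the potential at $x$ when unit current enters at $y$ and exits at $z$, with potential $0$ at $z$); thus $R_{a_i,p}+R_{b_i,p}=R_i$. If $e_i$ is a bridge, one sets $R_{a_i,p}=0,\ R_{b_i,p}=R_i$ when $p$ lies in the component of $\Gamma-e_i$ containing $p_i$, and $R_{a_i,p}=R_i,\ R_{b_i,p}=0$ otherwise, and every expression involving $R_i$ is interpreted as its limit as $R_i\to\infty$.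 For a self-loop, $R_i=0$. The Kirchhoff index is $Kf(\Gamma)=\frac12\sum_{p,q\in V(\Gamma)} r(p,q)$. $\overline{\Gamma}_i$ is the metrized graph obtained by contracting $e_i$ to a point (identifying $p_i$ and $q_i$), with vertex set the image of $V(\Gamma)$; the quantities for $\overline\Gamma_i$ are computed in $\overline\Gamma_i$. For a fixed vertex $p$ (the value is independent of the choice), $$y(\Gamma)=\frac14\sum_{e_i\in E(\Gamma)}\frac{L_iR_i^2}{(L_i+R_i)^2}+\frac34\sum_{e_i\in E(\Gamma)}\frac{L_i(R_{a_i,p}-R_{b_i,p})^2}{(L_i+R_i)^2}.$$ *)

(* Defs.v *)
(* Metrized graphs modelled as finite weighted multigraphs
   (vertex finType V, edge finType E, endpoint maps pt qt, lengths L). *)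
From mathcomp Require Import all_boot all_order all_algebra.
Set Implicit Arguments. Unset Strict Implicit. Unset Printing Implicit Defensive.
Import Order.TTheory GRing.Theory Num.Theory.
Local Open Scope ring_scope.

Section Metrized.
Variable R : realFieldType.

Section Graph.
Variables (V E : finType) (pt qt : E -> V) (L : E -> R).

Definition adj : rel V := fun x y =>
  [exists e, ((pt e == x) && (qt e == y)) || ((pt e == y) && (qt e == x))].
Definition connected_graph : bool := [forall x, [forall y, connect adj x y]].

Definition ind (v : V) (a : 'I_#|V|) : R := ((enum_val a) == v)%:R.

(* weighted Laplacian: each edge is a resistor of resistance L e
   (conductance (L e)^-1); self-loops contribute nothing *)
Definition laplacian : 'M[R]_#|V| :=
  \matrix_(a, b) \sum_(e : E)
     (L e)^-1 * (ind (pt e) a - ind (qt e) a) * (ind (pt e) b - ind (qt e) b).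

Definition grounded_laplacian (z : V) : 'M[R]_#|V| :=
  laplacian + delta_mx (enum_rank z) (enum_rank z).

(* voltage function j_z(x,y): potential at x when unit current enters at y
   and exits at z, potential 0 at z.  It is the unique f with
   laplacian f = e_y - e_z and f z = 0, i.e. grounded_laplacian z f = e_y - e_z. *)
Definition voltage (z x y : V) : R :=
  (invmx (grounded_laplacian z) *m \col_a (ind y a - ind z a)) (enum_rank x) ord0.

Definition resistance (x y : V) : R := voltage y x x.

Definition kirchhoff_index : R :=
  2^-1 * \sum_(x : V) \sum_(y : V) resistance x y.

End Graph.

Section Derived.
Variables (V E : finType) (pt qt : E -> V) (L : E -> R).

Definition del_pt (i : E) (e : {e : E | e != i}) : V := pt (val e).
Definition del_qt (i : E) (e : {e : E | e != i}) : V := qt (val e).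
Definition del_L (i : E) (e : {e : E | e != i}) : R := L (val e).

Definition is_bridge (i : E) : bool :=
  ~~ connected_graph (@del_pt i) (@del_qt i).

Definition Rdel (i : E) : R :=
  resistance (@del_pt i) (@del_qt i) (@del_L i) (pt i) (qt i).
Definition Ra (i : E) (w : V) : R :=
  voltage (@del_pt i) (@del_qt i) (@del_L i) (pt i) w (qt i).
Definition Rb (i : E) (w : V) : R :=
  voltage (@del_pt i) (@del_qt i) (@del_L i) (qt i) w (pt i).

(* contraction of edge i: q_i is identified with p_i; vertex set is the image
   of V, represented as V minus q_i (or all of V if e_i is a self-loop) *)
Definition cproj (i : E) (x : V) : V := if x == qt i then pt i else x.
Definition cV (i : E) := {x : V | (x != qt i) || (pt i == qt i)}.
Lemma cproj_ok (i : E) (x : V) : (cproj i x != qt i) || (pt i == qt i).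
Proof.
rewrite /cproj; case: ifP => [_|/negbT ->] //; exact: orNb.
Qed.
Definition cmap (i : E) (x : V) : cV i := exist _ (cproj i x) (cproj_ok i x).
Definition con_pt (i : E) (e : {e : E | e != i}) : cV i := cmap i (pt (val e)).
Definition con_qt (i : E) (e : {e : E | e != i}) : cV i := cmap i (qt (val e)).

Definition Kf_contract (i : E) : R :=
  kirchhoff_index (@con_pt i) (@con_qt i) (@del_L i).

(* coefficient R_i/(L_i+R_i); for a bridge, its limit as R_i -> oo, i.e. 1 *)
Definition coef (i : E) : R :=
  if is_bridge i then 1 else Rdel i / (L i + Rdel i).

(* summands of y; for a bridge, their limits as R_i -> oo (both equal L_i) *)
Definition yterm1 (i : E) : R :=
  if is_bridge i then L i else L i * (Rdel i) ^+ 2 / (L i + Rdel i) ^+ 2.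
Definition yterm2 (i : E) (w : V) : R :=
  if is_bridge i then L i
  else L i * (Ra i w - Rb i w) ^+ 2 / (L i + Rdel i) ^+ 2.

Definition ygamma (w : V) : R :=
  4^-1 * \sum_(i : E) yterm1 i + 3 / 4 * \sum_(i : E) yterm2 i w.

End Derived.
End Metrized.

(* Main.v *)
Require Import Defs.
From mathcomp Require Import all_boot all_order all_algebra.
From mathcomp Require Import ring lra.
Set Implicit Arguments. Unset Strict Implicit. Unset Printing Implicit Defensive.
Import Order.TTheory GRing.Theory Num.Theory.
Local Open Scope ring_scope.

Section Gen.
Variable R : realFieldType.
Variables (V E : finType) (pt qt : E -> V) (L : E -> R).

Definition dl (x y : V) : R := (x == y)%:R.
Definition Lap (f : V -> R) (x : V) : R :=
  \sum_(e : E) (L e)^-1 * (dl x (pt e) - dl x (qt e)) * (f (pt e) - f (qt e)).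
Definition Dir (f g : V -> R) : R :=
  \sum_(e : E) (L e)^-1 * (f (pt e) - f (qt e)) * (g (pt e) - g (qt e)).

Lemma sum_dl (f : V -> R) y : \sum_x f x * dl x y = f y.
Proof.
rewrite (bigD1 y) //= /dl eqxx mulr1 big1 ?addr0 // => x /negbTE ->.
by rewrite mulr0.
Qed.

Lemma sum_dl' (f : V -> R) y : \sum_x dl y x * f x = f y.
Proof.
rewrite -[RHS](sum_dl f y); apply: eq_bigr => x _.
by rewrite /dl eq_sym mulrC.
Qed.

Lemma Dir_Lap f g : Dir f g = \sum_x f x * Lap g x.
Proof.
rewrite /Dir /Lap.
under [RHS]eq_bigr do rewrite mulr_sumr.
rewrite exchange_big /=; apply: eq_bigr => e _.
rewrite -[f (pt e)](sum_dl f (pt e)) -[f (qt e)](sum_dl f (qt e)) -sumrB mulr_sumr mulr_suml.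
by apply: eq_bigr => x _; ring.
Qed.

Lemma DirC f g : Dir f g = Dir g f.
Proof. by apply: eq_bigr => e _; ring. Qed.

Lemma sum_Lap g : \sum_x Lap g x = 0.
Proof.
have := Dir_Lap (fun _ => 1) g.
under eq_bigr do rewrite mul1r.
move=> <-; rewrite /Dir big1 // => e _; ring.
Qed.

Lemma ind_dl (v : V) a : ind R v a = dl (enum_val a) v.
Proof. by []. Qed.

Lemma sum_ind (v : V) (F : 'I_#|V| -> R) :
  \sum_c ind R v c * F c = F (enum_rank v).
Proof.
rewrite (bigD1 (enum_rank v)) //= /ind enum_rankK eqxx mul1r big1 ?addr0 //.
move=> c hc; case: eqP => [h|]; last by rewrite mul0r.
by move: hc; rewrite -h enum_valK eqxx.
Qed.


Lemma sum_ind2 (F : V -> R) p q :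
  \sum_j (ind R p j - ind R q j) * F (enum_val j) = F p - F q.
Proof.
under eq_bigr do rewrite mulrBl.
by rewrite sumrB !(sum_ind _ (fun j => F (enum_val j))) !enum_rankK.
Qed.

Lemma sum_delta (a k : 'I_#|V|) (G : 'I_#|V| -> R) :
  \sum_j ((a == k) && (j == k))%:R * G j = (a == k)%:R * G k.
Proof.
rewrite (bigD1 k) //= eqxx andbT big1 ?addr0 // => j /negbTE ->.
by rewrite andbF mul0r.
Qed.

Lemma voltageE (N : V -> V -> R)
  (hN : forall x y z, Lap (fun u => N u y - N u z) x = dl x y - dl x z) z x y :
  voltage pt qt L z x y = N x y - N x z - N z y + N z z.
Proof.
pose Xf u y := N u y - N u z - N z y + N z z + 1.
pose X : 'M[R]_#|V| := \matrix_(a, b) Xf (enum_val a) (enum_val b).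
have AX : grounded_laplacian pt qt L z *m X = 1%:M.
  apply/matrixP => a b; rewrite !mxE.
  under eq_bigr do rewrite !mxE.
  under eq_bigr do rewrite mulrDl.
  rewrite big_split /= sum_delta.
  rewrite (_ : \sum_i _ * _ = \sum_e (L e)^-1 * (ind R (pt e) a - ind R (qt e) a) *
       (Xf (pt e) (enum_val b) - Xf (qt e) (enum_val b))); last first.
    under eq_bigr do rewrite mulr_suml.
    rewrite exchange_big; apply: eq_bigr => e _ /=.
    rewrite -(sum_ind2 (fun u => Xf u (enum_val b))) mulr_sumr.
    by apply: eq_bigr => i _; ring.
  have := hN (enum_val a) (enum_val b) z; rewrite /Lap => h.
  rewrite (_ : \sum_e _ = dl (enum_val a) (enum_val b) - dl (enum_val a) z); last first.
    by rewrite -h; apply: eq_bigr => e _; rewrite /Xf /ind /dl; ring.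
  rewrite /Xf enum_rankK /dl (inj_eq enum_val_inj).
  have -> : (a == enum_rank z) = (enum_val a == z).
    by rewrite -(inj_eq enum_val_inj) enum_rankK.
  ring.
have [Au _] := mulmx1_unit AX.
have iA : invmx (grounded_laplacian pt qt L z) = X.
  by rewrite -[RHS](mulKmx Au) AX mulmx1.
rewrite /voltage iA !mxE.
under eq_bigr do rewrite !mxE mulrC.
rewrite (sum_ind2 (fun u => Xf (enum_val (enum_rank x)) u)) /Xf enum_rankK.
ring.
Qed.

Lemma resistanceE N
  (hN : forall x y z, Lap (fun u => N u y - N u z) x = dl x y - dl x z) x y :
  resistance pt qt L x y = N x x - N x y - N y x + N y y.
Proof. rewrite /resistance (voltageE hN); ring. Qed.

Lemma kirchhoffE N
  (hN : forall x y z, Lap (fun u => N u y - N u z) x = dl x y - dl x z) :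
  kirchhoff_index pt qt L = #|V|%:R * \sum_x N x x - \sum_x \sum_y N x y.
Proof.
rewrite /kirchhoff_index.
under eq_bigr do under eq_bigr do rewrite (resistanceE hN).
under eq_bigr do rewrite big_split /= !sumrB sumr_const.
rewrite big_split /= !sumrB.
rewrite [X in _ - X + _]exchange_big /= [X in _ + X]sumr_const.
rewrite sumrMnl (_ : #|_| = #|V|) //.
rewrite -[(\sum_i N i i) *+ #|V|]mulr_natl.
have h2 : (2 : R) != 0 by rewrite pnatr_eq0.
by field.
Qed.

Lemma Lap_ext f g x :
  (forall e, f (pt e) - f (qt e) = g (pt e) - g (qt e)) -> Lap f x = Lap g x.
Proof. by move=> h; apply: eq_bigr => e _; rewrite h. Qed.

Lemma sum_dl1 x : \sum_y dl x y = 1.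
Proof. by rewrite -[RHS](sum_dl' (fun _ => 1) x); apply: eq_bigr => y _; rewrite mulr1. Qed.


Lemma sum_ind2' (g : 'I_#|V| -> R) p q :
  \sum_j (ind R p j - ind R q j) * g j = g (enum_rank p) - g (enum_rank q).
Proof. under eq_bigr do rewrite mulrBl. by rewrite sumrB !sum_ind. Qed.

Lemma glapM z m (X : 'M[R]_(#|V|, m)) a b :
  (grounded_laplacian pt qt L z *m X) a b =
  \sum_e (L e)^-1 * (ind R (pt e) a - ind R (qt e) a) *
     (X (enum_rank (pt e)) b - X (enum_rank (qt e)) b)
  + (a == enum_rank z)%:R * X (enum_rank z) b.
Proof.
rewrite !mxE.
under eq_bigr do rewrite !mxE mulrDl.
rewrite big_split /= sum_delta; congr (_ + _).
under eq_bigr do rewrite mulr_suml.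
rewrite exchange_big; apply: eq_bigr => e _ /=.
rewrite -(sum_ind2' (fun j => X j b)) mulr_sumr.
by apply: eq_bigr => i _; ring.
Qed.

Lemma glap_sym z : (grounded_laplacian pt qt L z)^T = grounded_laplacian pt qt L z.
Proof.
apply/matrixP => a b; rewrite !mxE andbC; congr (_ + _).
by apply: eq_bigr => e _; ring.
Qed.

Lemma adj_const (f : V -> R) (hf : forall e, f (pt e) = f (qt e)) x y :
  adj pt qt x y -> f x = f y.
Proof.
by case/existsP => e /orP [] /andP [/eqP <- /eqP <-]; rewrite hf.
Qed.

Lemma conn_const (f : V -> R) (hf : forall e, f (pt e) = f (qt e))
  (hc : connected_graph pt qt) x y : f x = f y.
Proof.
have := hc; move/forallP/(_ x)/forallP/(_ y)/connectP => [s hs ->].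
elim: s x hs => [|u s IH] x //= /andP [hxu hs].
by rewrite (adj_const hf hxu); apply: IH.
Qed.


Lemma sum_dl1' y : \sum_x dl x y = 1.
Proof. by rewrite -[RHS](sum_dl (fun _ => 1) y); apply: eq_bigr => x _; rewrite mul1r. Qed.

Lemma Lap_lin f (h : V -> V -> R) k x :
  Lap (fun u => f u - k * \sum_v h u v) x = Lap f x - k * \sum_v Lap (h^~ v) x.
Proof.
rewrite /Lap exchange_big /= mulr_sumr -sumrB; apply: eq_bigr => e _ /=.
rewrite -!mulr_sumr sumrB; ring.
Qed.

Lemma construct (hL : forall e, 0 < L e) (hc : connected_graph pt qt) (z : V) :
  exists M : V -> V -> R, [/\ forall x y, M x y = M y x,
     forall x, \sum_y M x y = 0 &
     forall x y, Lap (fun u => M u y) x = dl x y - (#|V|%:R)^-1].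
Proof.
have Au : (grounded_laplacian pt qt L z) \in unitmx.
  rewrite unitmxE unitfE; apply/negP => /det0P [v nv vA].
  pose f x := v 0 (enum_rank x).
  have AvT : (grounded_laplacian pt qt L z) *m v^T = 0.
    by rewrite -[grounded_laplacian _ _ _ _]glap_sym -trmx_mul vA trmx0.
  have key : \sum_e (L e)^-1 * (f (pt e) - f (qt e)) ^+ 2 + f z ^+ 2 = 0.
    have h0 : \sum_a v 0 a * ((grounded_laplacian pt qt L z) *m v^T) a 0 = 0.
      by rewrite AvT; apply: big1 => a _; rewrite mxE mulr0.
    rewrite -[X in _ = X]h0.
    under [X in _ = X]eq_bigr => a _ do rewrite (glapM z v^T a 0) mulrDr mulr_sumr.
    rewrite big_split /= exchange_big /=; congr (_ + _).
      apply: eq_bigr => e _.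
      rewrite (_ : \sum_a _ = (L e)^-1 * (f (pt e) - f (qt e)) *
         \sum_a (ind R (pt e) a - ind R (qt e) a) * v 0 a).
        by rewrite sum_ind2' /f; ring.
      by rewrite mulr_sumr; apply: eq_bigr => a _; rewrite !mxE /f; ring.
    rewrite (bigD1 (enum_rank z)) //= eqxx big1 ?addr0.
      by rewrite !mxE /f mul1r expr2.
    by move=> a /negbTE ->; rewrite mul0r mulr0.
  have hpos : forall e : E, 0 <= (L e)^-1 * (f (pt e) - f (qt e)) ^+ 2.
    by move=> e; rewrite mulr_ge0 ?sqr_ge0 // invr_ge0 ltW.
  move/eqP: key; rewrite paddr_eq0 ?sqr_ge0 ?sumr_ge0 // => /andP [/eqP hs hz].
  have he : forall e, f (pt e) = f (qt e).
    move=> e; move: (psumr_eq0P (fun e _ => hpos e) hs) => /(_ e isT).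
    move/eqP; rewrite mulf_eq0 invr_eq0 gt_eqF // sqrf_eq0 subr_eq0.
    by move/eqP.
  move: hz; rewrite sqrf_eq0 => /eqP hz.
  case/negP: nv; apply/eqP/rowP => a; rewrite mxE.
  have := conn_const he hc (enum_val a) z.
  by rewrite /f enum_valK => ->; exact: hz.
set G := invmx (grounded_laplacian pt qt L z).
have AG : (grounded_laplacian pt qt L z) *m G = 1%:M by apply: mulmxV.
have Gsym : forall a b, G a b = G b a.
  have h : G^T = G by rewrite /G trmx_inv glap_sym.
  by move=> a b; rewrite -[in LHS]h mxE.
pose Gf x y := G (enum_rank x) (enum_rank y).
have Gfs : forall x y, Gf x y = Gf y x by move=> x y; rewrite /Gf Gsym.
have hG : forall x y, Lap (fun u => Gf u y) x + dl x z * Gf z y = dl x y.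
  move=> x y; have := AG; move/matrixP => /(_ (enum_rank x) (enum_rank y)).
  rewrite /= glapM mxE !(inj_eq enum_rank_inj) => h.
  rewrite /dl -h; congr (_ + _).
  by apply: eq_bigr => e _; rewrite /ind enum_rankK.
have Gz : forall y, Gf z y = 1.
  move=> y; have : \sum_x (Lap (fun u => Gf u y) x + dl x z * Gf z y) = \sum_x dl x y.
    by apply: eq_bigr => x _; apply: hG.
  rewrite big_split /= sum_Lap add0r sum_dl1'.
  under eq_bigr do rewrite mulrC.
  by rewrite sum_dl.
have hL2 : forall x y, Lap (fun u => Gf u y) x = dl x y - dl x z.
  by move=> x y; rewrite -(hG x y) Gz mulr1 addrK.
have n0 : (#|V|%:R : R) != 0.
  by rewrite pnatr_eq0 -lt0n; apply/card_gt0P; exists z.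
set n := (#|V|%:R : R) in n0 *.
exists (fun x y => Gf x y - n^-1 * \sum_u Gf u y - n^-1 * \sum_v Gf x v
                   + n^-1 * n^-1 * \sum_u \sum_v Gf u v).
split.
- move=> x y.
  have e1 : \sum_u Gf u y = \sum_u Gf y u by apply: eq_bigr => u _; apply: Gfs.
  have e2 : \sum_v Gf x v = \sum_v Gf v x by apply: eq_bigr => u _; apply: Gfs.
  by rewrite e1 e2 Gfs; ring.
- move=> x.
  rewrite big_split /= !sumrB.
  have c1 : \sum_i n^-1 * \sum_u Gf u i = n^-1 * \sum_u \sum_v Gf u v.
    by rewrite -mulr_sumr exchange_big.
  have c2 : \sum_(i : V) n^-1 * \sum_v Gf x v = n * (n^-1 * \sum_v Gf x v).
    by rewrite sumr_const mulr_natl.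
  have c3 : \sum_(i : V) n^-1 / n * \sum_u \sum_v Gf u v = n * (n^-1 / n * \sum_u \sum_v Gf u v).
    by rewrite sumr_const mulr_natl.
  rewrite c1 c2 c3.
  by field.
- move=> x y.
  rewrite (@Lap_ext _ (fun u => Gf u y - n^-1 * \sum_v Gf u v)); last first.
    by move=> e; ring.
  rewrite Lap_lin hL2.
  under eq_bigr do rewrite hL2.
  rewrite sumrB sum_dl1 sumr_const (_ : #|_| = #|V|) // -mulr_natl -/n.
  by field.
Qed.


Lemma LapBZ f g k x :
  Lap (fun u => f u - k * g u) x = Lap f x - k * Lap g x.
Proof. rewrite /Lap mulr_sumr -sumrB; apply: eq_bigr => e _; ring. Qed.

Lemma LapB f g x : Lap (fun u => f u - g u) x = Lap f x - Lap g x.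
Proof. rewrite /Lap -sumrB; apply: eq_bigr => e _; ring. Qed.

Lemma Dir_ge0 (hL : forall e, 0 < L e) f : 0 <= Dir f f.
Proof.
have sq : forall r : R, 0 <= r * r by move=> r; rewrite -expr2 sqr_ge0.
apply: sumr_ge0 => e _; rewrite -mulrA; apply: mulr_ge0 (sq _).
by rewrite invr_ge0 ltW.
Qed.

Lemma Dir_eq0 (hL : forall e, 0 < L e) f : Dir f f = 0 -> forall e, f (pt e) = f (qt e).
Proof.
move=> h e.
have hpos : forall e : E, 0 <= (L e)^-1 * (f (pt e) - f (qt e)) * (f (pt e) - f (qt e)).
  have sq : forall r : R, 0 <= r * r by move=> r; rewrite -expr2 sqr_ge0.
  move=> e'; rewrite -mulrA; apply: mulr_ge0 (sq _).
  by rewrite invr_ge0 ltW.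
move: (psumr_eq0P (fun e _ => hpos e) h) => /(_ e isT) /eqP.
rewrite -mulrA mulf_eq0 invr_eq0 gt_eqF // -expr2 sqrf_eq0 subr_eq0.
by move/eqP.
Qed.

End Gen.
Arguments dl {R V} x y.

Lemma sum_sig (R : realFieldType) (T : finType) (P : pred T) (F : T -> R) :
  \sum_(x : {x | P x}) F (val x) = \sum_(x | P x) F x.
Proof.
rewrite [RHS](reindex_omap (val : {x | P x} -> T) insub); last first.
  by move=> x Px; rewrite insubT.
apply: eq_bigl => -[x Px] /=; rewrite Px insubT /=.
by apply/esym/eqP; congr Some; apply: val_inj.
Qed.

Section Main.
Variable R : realFieldType.
Variables (V E : finType) (pt qt : E -> V) (L : E -> R).
Variable hL : forall e, 0 < L e.
Variable M : V -> V -> R.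
Variable Msym : forall x y, M x y = M y x.
Variable Mrow : forall x, \sum_y M x y = 0.
Local Notation n := (#|V|%:R : R).
Variable M3 : forall x y, Lap pt qt L (fun u => M u y) x = dl x y - n^-1.
Variable n0 : n != 0.
Variable hc : connected_graph pt qt.

Lemma MNP x y z : Lap pt qt L (fun u => M u y - M u z) x = dl x y - dl x z.
Proof. by rewrite LapB !M3; ring. Qed.

Lemma Mcol y : \sum_x M x y = 0.
Proof. by under eq_bigr do rewrite Msym; apply: Mrow. Qed.

Lemma Kf_M : kirchhoff_index pt qt L = n * \sum_x M x x.
Proof.
rewrite (kirchhoffE MNP); under [X in _ - X]eq_bigr do rewrite Mrow.
by rewrite big1_eq subr0.
Qed.

Lemma DirM f y : Dir pt qt L f (fun u => M u y) = f y - n^-1 * \sum_x f x.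
Proof.
rewrite Dir_Lap; under eq_bigr do rewrite M3 mulrBr.
by rewrite sumrB sum_dl -mulr_suml mulrC.
Qed.

Lemma ker_const f : (forall x, Lap pt qt L f x = 0) -> forall u v, f u = f v.
Proof.
move=> h u v.
have hy : forall y, f y = n^-1 * \sum_x f x.
  move=> y; apply/eqP; rewrite -subr_eq0 -DirM DirC Dir_Lap big1 // => x _.
  by rewrite h mulr0.
by rewrite !hy.
Qed.

Definition psi i x := M x (pt i) - M x (qt i).
Definition rho i := psi i (pt i) - psi i (qt i).

Lemma Lap_psi i x : Lap pt qt L (psi i) x = dl x (pt i) - dl x (qt i).
Proof. exact: MNP. Qed.

Lemma sum_dl2 (G : V -> R) a b : \sum_y G y * (dl y a - dl y b) = G a - G b.
Proof. under eq_bigr do rewrite mulrBr. by rewrite sumrB !sum_dl. Qed.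

Lemma Tw (w : V -> R) :
  \sum_i (L i)^-1 * (w (pt i) * psi i (pt i) - w (qt i) * psi i (qt i))
  = (1 - n^-1) * \sum_y w y.
Proof.
transitivity (\sum_y w y * Lap pt qt L (fun u => M u y) y); last first.
  under eq_bigr do rewrite M3 /dl eqxx.
  by rewrite -mulr_suml mulrC.
rewrite (_ : \sum_y w y * Lap pt qt L (fun u => M u y) y =
   \sum_i (L i)^-1 * \sum_y (w y * (M (pt i) y - M (qt i) y)) * (dl y (pt i) - dl y (qt i))).
  apply: eq_bigr => i _; rewrite sum_dl2 /psi (Msym (qt i) (pt i)); ring.
rewrite /Lap; under eq_bigr do rewrite mulr_sumr.
rewrite exchange_big; apply: eq_bigr => i _ /=; rewrite mulr_sumr.
by apply: eq_bigr => y _; ring.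
Qed.

Lemma T1 : \sum_i (L i)^-1 * rho i = n - 1.
Proof.
have := Tw (fun _ => 1); rewrite sumr_const (_ : #|_| = #|V|) // => h.
rewrite (eq_bigr (fun i => (L i)^-1 * (1 * psi i (pt i) - 1 * psi i (qt i)))).
  by rewrite h -mulr_natr; field.
by move=> i _; rewrite !mul1r.
Qed.

Lemma T5 : \sum_i (L i)^-1 * (M (pt i) (pt i) * psi i (pt i) - M (qt i) (qt i) * psi i (qt i))
  = (1 - n^-1) * \sum_y M y y.
Proof. exact: (Tw (fun y => M y y)). Qed.

Lemma T3 w : \sum_i (L i)^-1 * psi i w ^+ 2 = M w w.
Proof.
have := DirM (fun u => M u w) w; rewrite Mcol mulr0 subr0 => <-.
by apply: eq_bigr => i _; rewrite /psi !(Msym w); ring.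
Qed.

Lemma T2 : \sum_i (L i)^-1 * \sum_x psi i x ^+ 2 = \sum_x M x x.
Proof.
under eq_bigr do rewrite mulr_sumr.
by rewrite exchange_big; apply: eq_bigr => x _; rewrite T3.
Qed.

Lemma T4 w : \sum_i (L i)^-1 * (psi i (pt i) + psi i (qt i)) * psi i w
  = M w w - n^-1 * \sum_x M x x.
Proof.
rewrite -(DirM (fun u => M u u) w).
by apply: eq_bigr => i _; rewrite /psi !(Msym w) (Msym (pt i) (qt i)); ring.
Qed.


Lemma Lap_del i f x :
  Lap pt qt L f x = Lap (@del_pt _ _ pt i) (@del_qt _ _ qt i) (@del_L _ _ L i) f x
    + (L i)^-1 * (dl x (pt i) - dl x (qt i)) * (f (pt i) - f (qt i)).
Proof.
rewrite /Lap (bigD1 i) //= addrC; congr (_ + _).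
symmetry.
exact: (sum_sig (fun e => e != i)
  (fun e => (L e)^-1 * (dl x (pt e) - dl x (qt e)) * (f (pt e) - f (qt e)))).
Qed.

Lemma Lne i : L i != 0.
Proof. by rewrite gt_eqF. Qed.

Lemma bridge_props i : is_bridge pt qt i ->
  rho i = L i /\
  forall w, (psi i (pt i) + psi i (qt i) - 2 * psi i w) ^+ 2 = L i ^+ 2.
Proof.
move=> hb.
set adj' := adj (@del_pt _ _ pt i) (@del_qt _ _ qt i).
have adjsym : symmetric adj'.
  move=> x y; rewrite /adj' /adj; apply/existsP/existsP => -[e he]; exists e;
  by rewrite orbC.
have hedge : forall e : {e | e != i}, adj' (pt (val e)) (qt (val e)).
  by move=> e; apply/existsP; exists e; rewrite /del_pt /del_qt !eqxx.
have nq : ~~ connect adj' (pt i) (qt i).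
  apply/negP => hpq; move: hb; rewrite /is_bridge => /negP; apply.
  apply/forallP => x; apply/forallP => y.
  have := hc; move/forallP/(_ x)/forallP/(_ y); apply: connect_sub.
  move=> u w /existsP [e he]; case: (eqVneq e i) => [ei | ne].
    move: he; rewrite ei; case/orP => /andP [/eqP <- /eqP <-] //.
    by rewrite (sym_connect_sym adjsym).
  by apply: connect1; apply/existsP; exists (exist _ e ne).
pose chi x : R := (connect adj' (pt i) x)%:R.
have hchi : forall e : {e | e != i}, chi (pt (val e)) = chi (qt (val e)).
  move=> e; rewrite /chi.
  suff -> : connect adj' (pt i) (pt (val e)) = connect adj' (pt i) (qt (val e)) by [].
  apply/idP/idP => h.
    exact: connect_trans h (connect1 (hedge e)).
  by apply: connect_trans h (connect1 _); rewrite adjsym; apply: hedge.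
have Lchi : forall x, Lap pt qt L chi x = (L i)^-1 * (dl x (pt i) - dl x (qt i)).
  move=> x; rewrite (Lap_del i) /Lap big1 ?add0r.
    by rewrite /chi connect0 (negbTE nq) /= subr0 mulr1.
  by move=> e _; rewrite /del_pt /del_qt hchi subrr mulr0.
have hk0 : forall x, Lap pt qt L (fun u => chi u - (L i)^-1 * psi i u) x = 0.
  by move=> x; rewrite LapBZ Lchi Lap_psi subrr.
have hk := ker_const hk0.
have dpsi : forall u v, psi i u - psi i v = L i * (chi u - chi v).
  move=> u v; have h := hk u v.
  have e : psi i u - psi i v - L i * (chi u - chi v) =
     - (L i * ((chi u - (L i)^-1 * psi i u) - (chi v - (L i)^-1 * psi i v))).
    by field; apply: Lne.
  by move: e; rewrite h subrr mulr0 oppr0 => /eqP; rewrite subr_eq0 => /eqP.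
have chip : chi (pt i) = 1 by rewrite /chi connect0.
have chiq : chi (qt i) = 0 by rewrite /chi (negbTE nq).
split.
  by rewrite /rho dpsi chip chiq subr0 mulr1.
move=> w.
rewrite (_ : psi i (pt i) + psi i (qt i) - 2 * psi i w =
   (psi i (pt i) - psi i w) + (psi i (qt i) - psi i w)); last by ring.
rewrite !dpsi chip chiq /chi; case: (connect _ _ _) => /=; ring.
Qed.


Lemma nonbridge_props i : ~~ is_bridge pt qt i ->
  [/\ coef pt qt L i = (L i)^-1 * rho i,
      yterm1 pt qt L i = (L i)^-1 * rho i ^+ 2 &
      forall w, yterm2 pt qt L i w =
        (L i)^-1 * (psi i (pt i) + psi i (qt i) - 2 * psi i w) ^+ 2].
Proof.
move=> hb.
have hc' : connected_graph (@del_pt _ _ pt i) (@del_qt _ _ qt i).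
  by move: hb; rewrite /is_bridge negbK.
have hL' : forall e, 0 < @del_L _ _ L i e by move=> e; apply: hL.
have [N [_ _ N3]] := construct hL' hc' (pt i).
have NNP : forall x y z, Lap (@del_pt _ _ pt i) (@del_qt _ _ qt i) (@del_L _ _ L i)
    (fun u => N u y - N u z) x = dl x y - dl x z.
  by move=> x y z; rewrite LapB !N3; ring.
pose phi u := N u (pt i) - N u (qt i).
have eRd : Rdel pt qt L i = phi (pt i) - phi (qt i).
  by rewrite /Rdel (resistanceE NNP) /phi; ring.
have eRa : forall w, Ra pt qt L i w = phi (pt i) - phi w.
  by move=> w; rewrite /Ra (voltageE NNP) /phi; ring.
have eRb : forall w, Rb pt qt L i w = phi w - phi (qt i).
  by move=> w; rewrite /Rb (voltageE NNP) /phi; ring.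
have Lphi' : forall x, Lap (@del_pt _ _ pt i) (@del_qt _ _ qt i) (@del_L _ _ L i) phi x
   = dl x (pt i) - dl x (qt i) by move=> x; apply: NNP.
set Rd := Rdel pt qt L i in eRd *.
have Rd0 : 0 <= Rd.
  rewrite eRd -(sum_dl2 phi); under eq_bigr do rewrite -Lphi'.
  by rewrite -Dir_Lap; apply: Dir_ge0.
set k := 1 + (L i)^-1 * Rd.
have k0 : 0 < k by rewrite /k ltr_pwDl // mulr_ge0 // invr_ge0 ltW.
have kne : k != 0 by rewrite gt_eqF.
have hk0 : forall x, Lap pt qt L (fun u => phi u - k * psi i u) x = 0.
  move=> x; rewrite LapBZ (Lap_del i) Lphi' Lap_psi -eRd /k; ring.
have hk := ker_const hk0.
have dphi : forall u v, phi u - phi v = k * (psi i u - psi i v).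
  move=> u v; have h := hk u v.
  have e : phi u - phi v - k * (psi i u - psi i v) =
     (phi u - k * psi i u) - (phi v - k * psi i v) by ring.
  by move: e; rewrite h subrr => /eqP; rewrite subr_eq0 => /eqP.
have eR : Rd = k * rho i by rewrite eRd dphi.
have eLR : L i + Rd = L i * k by rewrite /k; field; apply: Lne.
have Lne' := Lne i.
split.
- rewrite /coef (negbTE hb) -/Rd eLR eR; field.
  by rewrite Lne' kne.
- rewrite /yterm1 (negbTE hb) -/Rd eLR eR; field.
  by rewrite Lne' kne.
- move=> w; rewrite /yterm2 (negbTE hb) -/Rd eLR eRa eRb.
  rewrite (_ : phi (pt i) - phi w - (phi w - phi (qt i)) =
     (phi (pt i) - phi w) + (phi (qt i) - phi w)); last by ring.
  rewrite !dphi; field.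
  by rewrite Lne' kne.
Qed.


Lemma sum_psi i : \sum_y psi i y = 0.
Proof. by rewrite /psi sumrB !Mcol subrr. Qed.

Lemma contract_prop i (hcoef : coef pt qt L i = (L i)^-1 * rho i) :
  coef pt qt L i * Kf_contract pt qt L i =
  (L i)^-1 * ((n - 1) * (rho i * \sum_x M x x - \sum_x psi i x ^+ 2)
              - n * (rho i * M (qt i) (qt i) - psi i (qt i) ^+ 2)).
Proof.
rewrite hcoef.
case: (eqVneq (pt i) (qt i)) => [epq | npq].
  have ps0 : forall x, psi i x = 0 by move=> x; rewrite /psi epq subrr.
  have s0 : \sum_x psi i x ^+ 2 = 0 by apply: big1 => x _; rewrite ps0 expr2 mulr0.
  rewrite /rho s0 !ps0; ring.
have rho0 : rho i != 0.
  apply/negP => /eqP r0.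
  have hD : Dir pt qt L (psi i) (psi i) = 0.
    rewrite Dir_Lap; under eq_bigr do rewrite Lap_psi.
    by rewrite sum_dl2; exact: r0.
  have he := Dir_eq0 hL hD.
  have := Lap_psi i (pt i); rewrite /Lap big1 => [|e _]; last by rewrite he subrr mulr0.
  by rewrite /dl eqxx (negbTE npq) /= subr0 => /eqP; rewrite eq_sym oner_eq0.
pose K x y := M x y - psi i x * psi i y / rho i.
have Kpq : forall y, K (pt i) y = K (qt i) y.
  move=> y; have hM : M (pt i) y - M (qt i) y = psi i y by rewrite /psi !(Msym y).
  apply/eqP; rewrite -subr_eq0; apply/eqP.
  transitivity ((M (pt i) y - M (qt i) y) - rho i * psi i y / rho i).
    by rewrite /K /rho; field.
  by rewrite hM; field.
have Kcp : forall u y, K (cproj pt qt i u) y = K u y.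
  by move=> u y; rewrite /cproj; case: eqP => [-> | _] //; apply: Kpq.
pose Nb (a b : cV pt qt i) := K (val a) (val b).
have vq : forall a : cV pt qt i, val a != qt i.
  move=> a; case/orP: (valP a) => // h.
  by rewrite h in npq.
have NbNP : forall a b z, Lap (@con_pt _ _ pt qt i) (@con_qt _ _ pt qt i) (@del_L _ _ L i)
    (fun u => Nb u b - Nb u z) a = dl a b - dl a z.
  move=> a b z.
  have dlc : forall u : V, (dl a (cmap pt qt i u) : R) = dl (val a) u + dl (val a) (pt i) * dl (qt i) u.
    move=> u; rewrite /dl (_ : (a == cmap pt qt i u) = (val a == cproj pt qt i u)) // /cproj.
    case: (eqVneq u (qt i)) => [-> | nu].
      by move: (vq a) => /negbTE /= ->; rewrite add0r mulr1.
    by rewrite mulr0 addr0.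
  pose k u := K u (val b) - K u (val z).
  have kpq : k (pt i) = k (qt i) by rewrite /k !Kpq.
  pose Ld := Lap (@del_pt _ _ pt i) (@del_qt _ _ qt i) (@del_L _ _ L i).
  have hLd : forall x, Ld k x = Lap pt qt L k x.
    by move=> x; rewrite (Lap_del i) kpq subrr mulr0 addr0.
  transitivity (Ld k (val a) + dl (val a) (pt i) * Ld k (qt i)).
    rewrite /Ld /Lap mulr_sumr -big_split /=; apply: eq_bigr => e _.
    rewrite /con_pt /con_qt !dlc /Nb /= !Kcp /k /del_pt /del_qt; ring.
  rewrite !hLd.
  have ek : forall x, Lap pt qt L k x = Lap pt qt L (fun u => (M u (val b) - M u (val z))
       - ((psi i (val b) - psi i (val z)) / rho i) * psi i u) x.
    by move=> x; apply: Lap_ext => e; rewrite /k /K; field.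
  rewrite !ek !LapBZ !MNP.
  have d1 : forall (x : cV pt qt i), dl (qt i) (val x) = 0 :> R.
    move=> x; rewrite /dl; case: (eqVneq (qt i) (val x)) => h //.
    by move: (vq x); rewrite -h eqxx.
  have d2 : dl (val a) (qt i) = 0 :> R by rewrite /dl (negbTE (vq a)).
  have d3 : dl (qt i) (pt i) = 0 :> R by rewrite /dl eq_sym (negbTE npq).
  have d4 : dl (qt i) (qt i) = 1 :> R by rewrite /dl eqxx.
  rewrite !d1 d2 d3 d4 /dl -!val_eqE; ring.
rewrite /Kf_contract (kirchhoffE NbNP) /Nb.
have sum_cV : forall F : V -> R, \sum_(a : cV pt qt i) F (val a) = \sum_x F x - F (qt i).
  move=> F; rewrite (sum_sig (fun x => (x != qt i) || (pt i == qt i)) F).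
  rewrite [\sum_x F x](bigD1 (qt i)) //=.
  have -> : \sum_(x | (x != qt i) || (pt i == qt i)) F x = \sum_(x | x != qt i) F x.
    by apply: eq_bigl => x; rewrite (negbTE npq) orbF.
  ring.
have Krow : forall x, \sum_y K x y = 0.
  move=> x; rewrite /K sumrB Mrow -mulr_suml -mulr_sumr sum_psi; ring.
have Kcol : forall y, \sum_x K x y = 0.
  move=> y; rewrite /K sumrB Mcol -mulr_suml -mulr_suml sum_psi; ring.
rewrite (sum_cV (fun x => K x x)).
have hSS : \sum_(a : cV pt qt i) \sum_(b : cV pt qt i) K (val a) (val b) = K (qt i) (qt i).
  transitivity (\sum_(a : cV pt qt i) (\sum_y K (val a) y - K (val a) (qt i))).
    by apply: eq_bigr => a _; exact: (sum_cV (fun y => K (val a) y)).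
  rewrite (sum_cV (fun x => \sum_y K x y - K x (qt i))) Krow.
  under eq_bigr do rewrite Krow.
  by rewrite sumrB big1_eq Kcol; ring.
rewrite hSS.
have hV : (0 < #|V|)%N by apply/card_gt0P; exists (pt i).
rewrite (_ : #|_| = #|V|.-1); last first.
  rewrite card_sig -(cardC1 (qt i)); apply: eq_card => x.
  rewrite !inE; move/negbTE: npq => ->; by rewrite orbF.
rewrite -subn1 natrB // .
have sK : \sum_x K x x = \sum_x M x x - (\sum_x psi i x ^+ 2) / rho i.
  by rewrite /K sumrB mulr_suml.
rewrite sK /K.
by field; rewrite Lne rho0.
Qed.


Lemma main_identity w :
  (n - 4) * kirchhoff_index pt qt L =
    \sum_(i : E) coef pt qt L i * Kf_contract pt qt L i
    - n * ygamma pt qt L w.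
Proof.
have hcoef : forall i, coef pt qt L i = (L i)^-1 * rho i.
  move=> i; case hb: (is_bridge pt qt i).
    have [-> _] := bridge_props hb.
    by rewrite /coef hb mulVf // Lne.
  by have [] := nonbridge_props (negbT hb).
have hy1 : forall i, yterm1 pt qt L i = (L i)^-1 * rho i ^+ 2.
  move=> i; case hb: (is_bridge pt qt i).
    have [-> _] := bridge_props hb.
    by rewrite /yterm1 hb expr2 mulrA mulVf ?mul1r // Lne.
  by have [] := nonbridge_props (negbT hb).
have hy2 : forall i, yterm2 pt qt L i w =
    (L i)^-1 * (psi i (pt i) + psi i (qt i) - 2 * psi i w) ^+ 2.
  move=> i; case hb: (is_bridge pt qt i).
    have [_ ->] := bridge_props hb.
    by rewrite /yterm2 hb expr2 mulrA mulVf ?mul1r // Lne.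
  by have [_ _ ->] := nonbridge_props (negbT hb).
set tr := \sum_x M x x.
transitivity (\sum_i (((n - 1) * tr) * ((L i)^-1 * rho i)
   - (n - 1) * ((L i)^-1 * \sum_x psi i x ^+ 2)
   - n * ((L i)^-1 * (M (pt i) (pt i) * psi i (pt i) - M (qt i) (qt i) * psi i (qt i)))
   + (3 * n) * ((L i)^-1 * (psi i (pt i) + psi i (qt i)) * psi i w)
   - (3 * n) * ((L i)^-1 * psi i w ^+ 2))).
  rewrite !(sumrB, big_split) /= -!mulr_sumr T1 T2 T5 T4 T3 Kf_M -/tr.
  by field.
have -> : \sum_i coef pt qt L i * Kf_contract pt qt L i - n * ygamma pt qt L w =
   \sum_i (coef pt qt L i * Kf_contract pt qt L i
            - (n * (4^-1 * yterm1 pt qt L i) + n * (3 / 4 * yterm2 pt qt L i w))).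
  by rewrite /ygamma sumrB big_split /= -!mulr_sumr mulrDr.
apply: eq_bigr => i _.
rewrite (contract_prop (hcoef i)) hy1 hy2 /rho /psi (Msym (qt i) (pt i)).
have h4 : (4 : R) != 0 by rewrite pnatr_eq0.
by rewrite /tr; field; apply: Lne.
Qed.

End Main.

Unset Implicit Arguments.
Set Strict Implicit.

Theorem theorem3p5 (R : realFieldType) (V E : finType)
    (pt qt : E -> V) (L : E -> R)
    (hL : forall e : E, 0 < L e)
    (hconn : connected_graph pt qt)
    (hv : (4 <= #|V|)%N)
    (w : V) :
  (#|V|%:R - 4) * kirchhoff_index pt qt L =
    \sum_(i : E) coef pt qt L i * Kf_contract pt qt L i
    - #|V|%:R * ygamma pt qt L w.
Proof.
have hV0 : (0 < #|V|)%N by apply: leq_trans hv.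
have /card_gt0P [z _] := hV0.
have [M [Msym Mrow M3]] := construct hL hconn z.
have n0 : (#|V|%:R : R) != 0 by rewrite pnatr_eq0 -lt0n.
exact: (main_identity hL Msym Mrow M3 n0 hconn w).
Qed.
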